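(* Every finite nonempty set of integers is the signed degree set of some connected signed bipartite graph.
   Context: A signed bipartite graph $G(U,V)$ is a finite simple bipartite graph with bipartition $U, V$ (both nonempty, every edge joining a vertex of $U$ to a vertex of $V$) in which each edge is assigned a sign, positive or negative. The signed degree of a vertex $x$ is $\mathrm{sdeg}(x) = d^+(x) - d^-(x)$, where $d^+(x)$ (resp. $d^-(x)$) is the number of positive (resp. negative) edges incident with $x$. The signed degree set of $G(U,V)$ is the set of distinct signed degrees of its vertices. $G(U,V)$ is called connected if each vertex of $U$ is connected (by a path) to every vertex of $V$. *)

(* Defs.v *)
From mathcomp Require Import all_boot all_order all_algebra.
Set Implicit Arguments. Unset Strict Implicit. Unset Printing Implicit Defensive.
Import GRing.Theory Num.Theory.

(* A signed bipartite graph with parts U and V (finite types) is given by a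
   signing  s : U -> V -> option bool :
     s u v = None        : no edge between u and v,
     s u v = Some true   : a positive edge uv,
     s u v = Some false  : a negative edge uv.
   This gives exactly a finite simple bipartite graph (at most one edge per
   pair, edges only between U and V) with a sign on each edge. *)
Definition signing (U V : finType) := U -> V -> option bool.

Section SignedBipartite.
Variables (U V : finType) (s : signing U V).

Definition sdeg (x : U + V) : int :=
  match x with
  | inl u => (#|[set v | s u v == Some true]|%:Z - #|[set v | s u v == Some false]|%:Z)%R
  | inr v => (#|[set u | s u v == Some true]|%:Z - #|[set u | s u v == Some false]|%:Z)%R
  end.

Definition sadj : rel (U + V) := fun x y =>
  match x, y with
  | inl u, inr v => s u v != None
  | inr v, inl u => s u v != None
  | _, _ => false
  end.

Definition sconnected : Prop := forall u v, connect sadj (inl u) (inr v).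

Definition in_sdeg_set (z : int) : Prop := exists x : U + V, sdeg x = z.
End SignedBipartite.

(* Main.v *)
Require Import Defs.
From mathcomp Require Import all_boot all_order all_algebra zify.
Set Implicit Arguments. Unset Strict Implicit. Unset Printing Implicit Defensive.
Import GRing.Theory Num.Theory.

Definition wt (o : option bool) : int :=
  match o with Some true => 1%R | Some false => (-1)%R | None => 0%R end.

Lemma card_wt (V : finType) (h : V -> option bool) :
  (#|[set v | h v == Some true]|%:Z - #|[set v | h v == Some false]|%:Z
   = \sum_v wt (h v))%R.
Proof.
have E : forall P : pred V, (#|[set v | P v]|%:Z = \sum_v (if P v then 1 else 0))%R.
  move=> P; rewrite -sum1_card (big_morph Posz PoszD (erefl _)) big_mkcond /=.
  by apply: eq_bigr => v _; rewrite inE; case: (P v).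
rewrite !E -sumrB; apply: eq_bigr => v _.
by case: (h v) => [[]|].
Qed.

Lemma sum_sign_even m : (\sum_(0 <= d < m.*2) (-1) ^+ d = 0 :> int)%R.
elim: m => [|m IH]; first by rewrite big_nil.
rewrite doubleS big_nat_recr // big_nat_recr // IH.
rewrite -[((-1) ^+ m.*2)%R]signr_odd -[((-1) ^+ m.*2.+1)%R]signr_odd.
rewrite oddS odd_double.
rewrite expr0 expr1.
by [].
Qed.

Lemma sum_lt_cst (s : int) (c N : nat) :
  (\sum_(0 <= d < N) (if (d < c)%N then s else 0) = s *+ minn c N)%R.
Proof.
elim: N => [|N IH]; first by rewrite big_nil minn0.
rewrite big_nat_recr // IH.
case: (ltnP N c) => h.
  by rewrite (minn_idPr h) mulrSr.
by rewrite (minn_idPl (leqW h)); apply: addr0.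
Qed.

Definition sgn (a : int) : int := if (a < 0)%R then (-1)%R else 1%R.

Lemma sgn_abs (a : int) : (sgn a *+ `|a|%N)%R = a.
Proof.
case: a => p; rewrite /sgn.
  have -> : (Posz p < 0)%R = false by [].
  exact: natz.
have -> : (Negz p < 0)%R = true by [].
rewrite mulNrn NegzE; congr (- _)%R; exact: natz.
Qed.

Section Con.
Variable T : seq int.
Definition MM := foldr (fun z acc => `|z|%N + acc)%N 0%N T.
Local Notation nn := (MM.*2).+2.
Local Notation kk := (size T).

Lemma abs_le z : z \in T -> (`|z| <= MM)%N.
Proof.
rewrite /MM; elim: T => [//|y t IH]; rewrite inE => /orP [/eqP ->|/IH h] /=.
  exact: leq_addr.
exact: leq_trans h (leq_addl _ _).
Qed.

Definition aa (i : 'I_(size T)) : int := nth 0%R T i.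

Definition FF (i j : 'I_(size T)) (d : 'I_((MM.*2).+2)) : int :=
  if i == j then (if (d < `|aa i|)%N then sgn (aa i) else 0%R) else ((-1) ^+ d)%R.

Definition ff (u v : 'I_(size T) * 'I_((MM.*2).+2)) : int := FF u.1 v.1 (v.2 - u.2)%R.

Definition sg : signing ('I_(size T) * 'I_((MM.*2).+2))%type ('I_(size T) * 'I_((MM.*2).+2))%type := fun u v =>
  if ff u v == 1%R then Some true else if ff u v == (-1)%R then Some false else None.

Lemma wt_sg u v : wt (sg u v) = ff u v.
Proof.
rewrite /sg; case: (ff u v =P 1%R) => [->//|H1]; case: (ff u v =P (-1)%R) => [->//|H2].
move: H1 H2; rewrite /ff /FF; case: eqP => _.
  case: ifP => _ //; rewrite /sgn; case: ifP => _ //.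
rewrite -signr_odd; case: odd => //.
Qed.

Lemma sumFF i j : (\sum_(d : 'I_((MM.*2).+2)) FF i j d = if i == j then aa i else 0)%R.
Proof.
rewrite /FF; case: eqP => _.
  rewrite -(big_mkord xpredT (fun d => if (d < `|aa i|)%N then sgn (aa i) else 0%R)).
  rewrite sum_lt_cst (minn_idPl _) ?sgn_abs //.
  apply: leq_trans (abs_le (mem_nth 0%R (ltn_ord i))) _.
  rewrite -addnn; lia.
rewrite -(big_mkord xpredT (fun d => (-1) ^+ d)%R).
exact: (sum_sign_even MM.+1).
Qed.

Lemma shift_row (G : 'I_((MM.*2).+2) -> int) x : (\sum_y G (y - x) = \sum_y G y)%R.
Proof.
rewrite (reindex_inj (addIr x)) /=; apply: eq_bigr => y _; by rewrite addrK.
Qed.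

Lemma shift_col (G : 'I_((MM.*2).+2) -> int) y : (\sum_x G (y - x) = \sum_x G x)%R.
Proof.
rewrite (reindex_inj (inv_inj (subKr y))) /=; apply: eq_bigr => x _; by rewrite subKr.
Qed.

Lemma sdeg_l u : sdeg sg (inl u) = aa u.1.
Proof.
rewrite /sdeg card_wt.
under eq_bigr do rewrite wt_sg.
rewrite /ff -(pair_big xpredT xpredT (fun j y => FF u.1 j (y - u.2)%R)) /=.
under eq_bigr do rewrite shift_row sumFF.
rewrite (bigD1 u.1) //= eqxx big1 ?addr0 // => j /negbTE; by rewrite eq_sym => ->.
Qed.

Lemma sdeg_r v : sdeg sg (inr v) = aa v.1.
Proof.
rewrite /sdeg card_wt.
under eq_bigr do rewrite wt_sg.
rewrite /ff -(pair_big xpredT xpredT (fun i x => FF i v.1 (v.2 - x)%R)) /=.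
under eq_bigr do rewrite shift_col sumFF.
rewrite (bigD1 v.1) //= eqxx big1 ?addr0 // => j /negbTE ->; done.
Qed.

Lemma adj_ne u v : u.1 != v.1 -> sadj sg (inl u) (inr v) /\ sadj sg (inr v) (inl u).
Proof.
move=> h; suff H : sg u v != None by [].
rewrite /sg /ff /FF (negbTE h) -signr_odd; case: odd => //.
Qed.

End Con.

Lemma three k (i : 'I_k) : 2 < k -> exists j l : 'I_k, [/\ j != i, l != j & l != i].
Proof.
move=> h2; have h1 : 1 < k by apply: ltnW. have h0 : 0 < k by apply: ltnW.
case: (i =P Ordinal h0) => [->|n0].
  by exists (Ordinal h1), (Ordinal h2).
case: (i =P Ordinal h1) => [->|n1].
  by exists (Ordinal h0), (Ordinal h2).
exists (Ordinal h0), (Ordinal h1); split => //; apply/eqP => e; [apply: n0|apply: n1]; by rewrite e.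
Qed.

Theorem theorem2p2 (S : seq int) : S != [::] ->
  exists (U V : finType) (s : signing U V),
    [/\ 0 < #|U|, 0 < #|V|, sconnected s &
        forall z : int, z \in S <-> in_sdeg_set s z].
Proof.
move=> HS; have hS : 0 < size S by case: S HS.
pose T := S ++ S ++ S.
have hT : 2 < size T by rewrite /T !size_cat; lia.
exists ('I_(size T) * 'I_((MM T).*2.+2))%type, ('I_(size T) * 'I_((MM T).*2.+2))%type, (sg (T:=T)).
split.
- by rewrite card_prod !card_ord muln_gt0; apply/andP; split => //; lia.
- by rewrite card_prod !card_ord muln_gt0; apply/andP; split => //; lia.
- move=> [i x] [j y].
  case: (eqVneq i j) => [<-|ne].
    have [j' [l [h1 h2 h3]]] := three i hT.
    have A1 := (adj_ne (T:=T) (u:=(i,x)) (v:=(j',ord0)) ltac:(by rewrite eq_sym)).1.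
    have A2 := (adj_ne (T:=T) (u:=(l,ord0)) (v:=(j',ord0)) h2).2.
    have A3 := (adj_ne (T:=T) (u:=(l,ord0)) (v:=(i,y)) h3).1.
    apply: connect_trans (connect1 A1) _.
    apply: connect_trans (connect1 A2) (connect1 A3).
  by apply: connect1; apply: (adj_ne (u:=(i,x)) (v:=(j,y)) _).1.
- move=> z; split.
    move=> zS; have zT : z \in T by rewrite /T mem_cat zS.
    have hi : index z T < size T by rewrite index_mem.
    exists (inl (Ordinal hi, ord0)); rewrite sdeg_l /aa /=; exact: nth_index.
  case=> [[u|v] <-]; rewrite ?sdeg_l ?sdeg_r /aa.
    by have := mem_nth 0%R (ltn_ord u.1); rewrite /T !mem_cat => /orP[|/orP[]].
  by have := mem_nth 0%R (ltn_ord v.1); rewrite /T !mem_cat => /orP[|/orP[]].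
Qed.
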